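(* Let $\bar x \in \mathrm{dom}\,\psi$, $H>0$, let $F'(\bar x)\in\partial F(\bar x)$ be a chosen subgradient with $F'(\bar x)\neq 0$, let $A = A_H(\bar x) = \frac{1}{\sigma}\sqrt{\frac{H}{3}\|F'(\bar x)\|_*}$ and $T = T_A(\bar x)$. Assume that $$f(T) \le f(\bar x) + \langle \nabla f(\bar x), T - \bar x\rangle + \tfrac12 \langle \nabla^2 f(\bar x)(T-\bar x), T - \bar x\rangle + \tfrac{H}{6}\|T - \bar x\|^3 .$$ Then $$F(\bar x) - F(T) \;\ge\; \tfrac12 \langle \nabla^2 f(\bar x)(T-\bar x), T-\bar x\rangle + \tfrac12 \sigma A \|T - \bar x\|^2 .$$
   Context: $\mathbb{E}$ is a finite-dimensional real vector space with an arbitrary norm $\|\cdot\|$; $\mathbb{E}^*$ is its dual with dual norm $\|g\|_* = \max\{\langle g, x\rangle : \|x\|\le 1\}$. $F = f + \psi$, where $\psi$ is a closed convex function with $\mathrm{dom}\,\psi \subseteq \mathbb{E}$ and $f$ is convex and twice continuously differentiable; subgradients of $F$ have the form $F'(\bar x) = \nabla f(\bar x) + \psi'(\bar x)$ with $\psi'(\bar x) \in \partial \psi(\bar x)$. The scaling function $d$ is differentiable and satisfies, for some $\sigma\in(0,1]$ and all $x,y \in \mathrm{dom}\,\psi$: $d(y) \ge d(x) + \langle \nabla d(x), y-x\rangle + \frac{\sigma}{2}\|y-x\|^2$ and $\|\nabla d(x) - \nabla d(y)\|_* \le \|x-y\|$. Bregman distance: $\rho(x,y) = d(y) - d(x) -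 \langle \nabla d(x), y-x\rangle$. For $A>0$, $$T_A(\bar x) = \arg\min_{y\in\mathrm{dom}\,\psi}\Big[ f(\bar x) + \langle \nabla f(\bar x), y-\bar x\rangle + \tfrac12 \langle \nabla^2 f(\bar x)(y-\bar x), y-\bar x\rangle + A\rho(\bar x,y) + \psi(y)\Big].$$ *)

(* Defs.v *)
From HB Require Import structures.
From mathcomp Require Import all_boot all_order all_algebra.
From mathcomp Require Import all_classical all_reals all_analysis.
Set Implicit Arguments. Unset Strict Implicit. Unset Printing Implicit Defensive.
Import Order.TTheory GRing.Theory Num.Theory.
Import numFieldNormedType.Exports.
Local Open Scope classical_set_scope.
Local Open Scope ring_scope.

(* E = 'rV[R]_n (finite-dimensional real vector space); its dual E^* is also
   represented by 'rV[R]_n through the pairing <g, x> = sum_i g_i x_i. *)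
Definition pair {R : realType} {n : nat} (g x : 'rV[R]_n) : R :=
  \sum_(i < n) g ord0 i * x ord0 i.

Definition is_norm {R : realType} {n : nat} (nrm : 'rV[R]_n -> R) : Prop :=
  [/\ forall x y, nrm (x + y) <= nrm x + nrm y,
      forall (a : R) x, nrm (a *: x) = `|a| * nrm x
    & forall x, nrm x = 0 -> x = 0].

(* Dual norm ||g||_* = max { <g,x> : ||x|| <= 1 } (the max is attained, so it
   equals the sup). *)
Definition dual_norm {R : realType} {n : nat} (nrm : 'rV[R]_n -> R)
  (g : 'rV[R]_n) : R :=
  sup [set pair g x | x in [set x | nrm x <= 1]].

Definition dom {R : realType} {n : nat} (psi : 'rV[R]_n -> \bar R) :
  set 'rV[R]_n := [set x | (psi x < +oo)%E].

Definition closed_convex_fun {R : realType} {n : nat}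
  (psi : 'rV[R]_n -> \bar R) : Prop :=
  [/\ (forall x, psi x != -oo%E),
      closed [set p : 'rV[R]_n * R | (psi p.1 <= p.2%:E)%E]
    & forall x y (t : R), x \in dom psi -> y \in dom psi -> 0 < t < 1 ->
        (psi (t *: x + (1 - t) *: y)%R <= t%:E * psi x + (1 - t)%R%:E * psi y)%E].

Definition convex_fun {R : realType} {n : nat} (f : 'rV[R]_n -> R) : Prop :=
  forall x y (t : R), 0 <= t <= 1 ->
    f (t *: x + (1 - t) *: y) <= t * f x + (1 - t) * f y.

Definition is_gradient {R : realType} {n : nat} (f : 'rV[R]_n -> R)
  (gf : 'rV[R]_n -> 'rV[R]_n) : Prop :=
  forall x, differentiable f x /\ ('d f x : 'rV[R]_n -> R) = pair (gf x).

(* f is convex, twice continuously differentiable with gradient gf; the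
   Hessian at x is the linear map 'd gf x : E -> E^*. *)
Definition C2_with_gradient {R : realType} {n : nat} (f : 'rV[R]_n -> R)
  (gf : 'rV[R]_n -> 'rV[R]_n) : Prop :=
  [/\ is_gradient f gf,
      (forall x, differentiable gf x)
    & forall h : 'rV[R]_n, continuous (fun x => ('d gf x : 'rV[R]_n -> 'rV[R]_n) h)].

Definition hess {R : realType} {n : nat} (gf : 'rV[R]_n -> 'rV[R]_n)
  (x h : 'rV[R]_n) : 'rV[R]_n := ('d gf x : 'rV[R]_n -> 'rV[R]_n) h.

Definition subgrad {R : realType} {n : nat} (psi : 'rV[R]_n -> \bar R)
  (x s : 'rV[R]_n) : Prop :=
  forall y, (psi y >= psi x + (pair s (y - x))%:E)%E.

Definition bregman {R : realType} {n : nat} (d : 'rV[R]_n -> R)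
  (gd : 'rV[R]_n -> 'rV[R]_n) (x y : 'rV[R]_n) : R :=
  d y - d x - pair (gd x) (y - x).

Definition scaling_fun {R : realType} {n : nat} (nrm : 'rV[R]_n -> R)
  (psi : 'rV[R]_n -> \bar R) (sigma : R) (d : 'rV[R]_n -> R)
  (gd : 'rV[R]_n -> 'rV[R]_n) : Prop :=
  [/\ is_gradient d gd,
      (forall x y, x \in dom psi -> y \in dom psi ->
         d y >= d x + pair (gd x) (y - x) + sigma / 2 * nrm (y - x) ^+ 2)
    & (forall x y, x \in dom psi -> y \in dom psi ->
         dual_norm nrm (gd x - gd y) <= nrm (x - y))].

Definition model {R : realType} {n : nat} (f : 'rV[R]_n -> R)
  (gf : 'rV[R]_n -> 'rV[R]_n) (psi : 'rV[R]_n -> \bar R)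
  (d : 'rV[R]_n -> R) (gd : 'rV[R]_n -> 'rV[R]_n) (A : R) (xbar y : 'rV[R]_n)
  : \bar R :=
  ((f xbar + pair (gf xbar) (y - xbar)
    + 1 / 2 * pair (hess gf xbar (y - xbar)) (y - xbar)
    + A * bregman d gd xbar y)%:E + psi y)%E.

Definition is_TA {R : realType} {n : nat} (f : 'rV[R]_n -> R)
  (gf : 'rV[R]_n -> 'rV[R]_n) (psi : 'rV[R]_n -> \bar R)
  (d : 'rV[R]_n -> R) (gd : 'rV[R]_n -> 'rV[R]_n) (A : R) (xbar T : 'rV[R]_n)
  : Prop :=
  T \in dom psi /\
  forall y, y \in dom psi ->
    (model f gf psi d gd A xbar T <= model f gf psi d gd A xbar y)%E.

(* Main.v *)
Require Import Defs.
From HB Require Import structures.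
From mathcomp Require Import all_boot all_order all_algebra.
From mathcomp Require Import all_classical all_reals all_analysis.
From mathcomp Require Import ring lra.
Import Order.TTheory GRing.Theory Num.Theory.
Local Open Scope ring_scope.

Section S.
Import numFieldNormedType.Exports.
Local Open Scope classical_set_scope.
Local Open Scope ring_scope.
Variables (R : realType) (n : nat).
Implicit Types (a b g x y : 'rV[R]_n).

Lemma pairDl a b x : pair (a + b) x = pair a x + pair b x.
Proof. by rewrite /pair -big_split; apply: eq_bigr => i _; rewrite !mxE mulrDl. Qed.
Lemma pairDr a x y : pair a (x + y) = pair a x + pair a y.
Proof. by rewrite /pair -big_split; apply: eq_bigr => i _; rewrite !mxE mulrDr. Qed.
Lemma pairZl k a x : pair (k *: a) x = k * pair a x.
Proof. by rewrite /pair mulr_sumr; apply: eq_bigr => i _; rewrite !mxE mulrA. Qed.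
Lemma pairZr k a x : pair a (k *: x) = k * pair a x.
Proof. by rewrite /pair mulr_sumr; apply: eq_bigr => i _; rewrite !mxE mulrCA. Qed.
Lemma pairNr a x : pair a (- x) = - pair a x.
Proof. by rewrite -scaleN1r pairZr mulN1r. Qed.
Lemma pairNl a x : pair (- a) x = - pair a x.
Proof. by rewrite -scaleN1r pairZl mulN1r. Qed.
Lemma pairBr a x y : pair a (x - y) = pair a x - pair a y.
Proof. by rewrite pairDr pairNr. Qed.
Lemma pair0r a : pair a 0 = 0.
Proof. by rewrite -(scale0r 0) pairZr mul0r. Qed.

Variable nrm : 'rV[R]_n -> R.
Hypothesis Hn : is_norm nrm.

Lemma nrmZ k x : nrm (k *: x) = `|k| * nrm x.
Proof. by case: Hn. Qed.
Lemma nrmD x y : nrm (x + y) <= nrm x + nrm y.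
Proof. by case: Hn. Qed.
Lemma nrm0 : nrm 0 = 0.
Proof. by rewrite -(scale0r 0) nrmZ normr0 mul0r. Qed.
Lemma nrmN x : nrm (- x) = nrm x.
Proof. by rewrite -scaleN1r nrmZ normrN normr1 mul1r. Qed.
Lemma nrm_ge0 x : 0 <= nrm x.
Proof. have := nrmD x (- x); rewrite subrr nrm0 nrmN => h; lra. Qed.
Lemma nrm_eq0 x : nrm x = 0 -> x = 0.
Proof. by case: Hn => _ _; apply. Qed.

Lemma nrm_sum (I : Type) (s : seq I) (F : I -> 'rV[R]_n) :
  nrm (\sum_(i <- s) F i) <= \sum_(i <- s) nrm (F i).
Proof.
elim: s => [|i s IH]; first by rewrite !big_nil nrm0.
rewrite !big_cons; apply: (le_trans (nrmD _ _)); lra.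
Qed.

Lemma coord_le x j : `|x ord0 j| <= `|x|.
Proof.
rewrite [leRHS]/Num.norm /= mx_normrE; apply/bigmax_geP; right => /=.
by exists (ord0, j).
Qed.

Definition Cn := \sum_(j < n) nrm (delta_mx ord0 j).

Lemma Cn_ge0 : 0 <= Cn.
Proof. by apply: sumr_ge0 => j _; apply: nrm_ge0. Qed.

Lemma nrm_up x : nrm x <= Cn * `|x|.
Proof.
rewrite {1}(row_sum_delta x) /Cn mulr_suml.
apply: (le_trans (nrm_sum _ _ _)); apply: ler_sum => j _.
rewrite nrmZ mulrC; apply: ler_wpM2l; first exact: nrm_ge0.
exact: coord_le.
Qed.

Lemma nrm_lip x y : `|nrm x - nrm y| <= (Cn + 1) * `|x - y|.
Proof.
have h1 := nrmD (x - y) y; have h2 := nrmD (y - x) x.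
rewrite subrK in h1; rewrite subrK in h2.
have h3 := nrm_up (x - y); rewrite -opprB nrmN in h2.
have h4 : 0 <= `|x - y| by [].
apply/ler_normlP; split; nra.
Qed.

Lemma lip_cont (phi : 'rV[R]_n -> R) C : 0 < C ->
  (forall x y, `|phi x - phi y| <= C * `|x - y|) -> continuous phi.
Proof.
move=> C0 H x; apply/(@cvgrPdist_lt _ _ _ (nbhs x)) => e e0; near=> z.
rewrite (le_lt_trans (H _ _))// -ltr_pdivlMl//.
near: z; apply: (@cvgr_dist_lt _ _ _ _ _ (@id ('rV[R]_n))); first exact: cvg_id.
by rewrite mulr_gt0 ?invr_gt0.
Unshelve. all: by end_near. Qed.

Lemma nrm_cont : continuous nrm.
Proof. apply: (@lip_cont _ (Cn + 1)); last exact: nrm_lip.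
have := Cn_ge0; lra. Qed.


Lemma nrm_low : exists2 m, 0 < m & forall x, m * `|x| <= nrm x.
Proof.
pose S := [set x : 'rV[R]_n | `|x| = 1].
have key x : x != 0 -> S (`|x|^-1 *: x).
  move=> x0; rewrite /S /= normrZ normfV normr_id mulVf //.
  by rewrite normr_eq0.
have [S0|Sne] := pselect (S !=set0); last first.
  exists 1 => // x; have [->|x0] := eqVneq x 0.
    by rewrite normr0 mulr0 nrm_ge0.
  by exfalso; apply: Sne; exists (`|x|^-1 *: x); apply: key.
have cS : compact S.
  apply: bounded_closed_compact.
    exists 1; split; first by rewrite num_real.
    by move=> M M1 x Sx /=; rewrite Sx ltW.
  apply: (@preimage_closed _ _ (fun x : 'rV[R]_n => `|x|) [set y | y = 1]).
    by move=> x _; apply: norm_continuous.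
  exact: closed_eq.
have [c cS' cmin] : exists2 c, c \in S & forall t, t \in S -> nrm c <= nrm t.
  apply: EVT_min_rV => //; apply: continuous_subspaceT; exact: nrm_cont.
have c0 : 0 < nrm c.
  rewrite lt_neqAle nrm_ge0 andbT; apply/eqP => /esym/nrm_eq0 c0.
  by move: cS'; rewrite inE /S /= c0 normr0 => /esym/eqP; rewrite oner_eq0.
exists (nrm c) => // x; have [->|x0] := eqVneq x 0.
  by rewrite normr0 mulr0 nrm_ge0.
have := cmin _ (mem_set (key _ x0)); rewrite nrmZ normfV normr_id.
have xp : 0 < `|x| by rewrite normr_gt0.
by rewrite ler_pdivlMl // mulrC.
Qed.

Lemma pair_le g x : pair g x <= (\sum_(j < n) `|g ord0 j|) * `|x|.
Proof.
rewrite /pair mulr_suml; apply: ler_sum => j _.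
apply: (le_trans (ler_norm _)); rewrite normrM.
by apply: ler_wpM2l => //; apply: coord_le.
Qed.

Lemma dual_has_sup g : has_sup [set pair g x | x in [set x | nrm x <= 1]].
Proof.
split; first by exists (pair g 0), 0 => //=; rewrite nrm0.
have [m m0 hm] := nrm_low.
exists ((\sum_(j < n) `|g ord0 j|) / m) => _ [x /= x1 <-].
apply: (le_trans (pair_le g x)).
have s0 : 0 <= \sum_(j < n) `|g ord0 j| by apply: sumr_ge0.
have : `|x| <= m^-1.
  by rewrite -(ler_pM2l m0) mulfV ?gt_eqF //; apply: (le_trans (hm x)).
by move=> h; apply: ler_wpM2l.
Qed.

Lemma dual_ge g x : nrm x <= 1 -> pair g x <= dual_norm nrm g.
Proof.
move=> x1; apply: sup_upper_bound; first exact: dual_has_sup.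
by exists x.
Qed.

End S.

Section S2.
Import numFieldNormedType.Exports.
Local Open Scope classical_set_scope.
Local Open Scope ring_scope.
Variables (R : realType) (n : nat).
Implicit Types (a b g x y h : 'rV[R]_n).

Lemma lim_right_le (u : R -> R) L c : u @ 0^' --> L ->
  (forall t, 0 < t < 1 -> u t <= c) -> L <= c.
Proof.
move=> /cvg_dnbhs_at_right Hu Hc; apply: (cvgr_to_le Hu).
near=> t; apply: Hc; apply/andP; split.
  by near: t; exact: nbhs_right_gt.
by near: t; apply: nbhs_right_lt; exact: ltr01.
Unshelve. all: by end_near. Qed.

Lemma lim_right_ge (u : R -> R) L c : u @ 0^' --> L ->
  (forall t, 0 < t < 1 -> c <= u t) -> c <= L.
Proof.
move=> /cvg_dnbhs_at_right Hu Hc; apply: (cvgr_to_ge Hu).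
near=> t; apply: Hc; apply/andP; split.
  by near: t; exact: nbhs_right_gt.
by near: t; apply: nbhs_right_lt; exact: ltr01.
Unshelve. all: by end_near. Qed.

Lemma grad_ineq (f : 'rV[R]_n -> R) gf x y : convex_fun f -> is_gradient f gf ->
  f x + pair (gf x) (y - x) <= f y.
Proof.
move=> cf gr; have [dfx dfE] := gr x.
have := deriveE (y - x) dfx; rewrite dfE => <-.
suff : 'D_(y - x) f x <= f y - f x by move=> ?; lra.
have D : derivable f x (y - x) := diff_derivable dfx.
apply: lim_right_le; first exact: D.
move=> t /andP[t0 t1] /=.
have -> : t *: (y - x) + x = t *: y + (1 - t) *: x.
  by rewrite scalerBr scalerBl scale1r -addrA (addrC (- _) x).
have := cf y x t; rewrite ltW // ltW // => /(_ isT) H.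
rewrite /GRing.scale /= ler_pdivrMl //; lra.
Qed.

Lemma pairC a b : pair a b = pair b a.
Proof. by apply: eq_bigr => i _; rewrite mulrC. Qed.

Lemma pair_abs a b : `|pair a b| <= (\sum_(j < n) `|b ord0 j|) * `|a|.
Proof.
apply/ler_normlP; split; last by rewrite pairC pair_le.
by have := @pair_le _ _ b (- a); rewrite normrN pairC pairNl => ?; lra.
Qed.

Lemma pair_cont h : continuous (fun w : 'rV[R]_n => pair w h).
Proof.
apply: (@lip_cont R n _ (\sum_(j < n) `|h ord0 j| + 1)).
  by rewrite ltr_wpDl // sumr_ge0.
move=> a b; rewrite -pairNl -pairDl.
apply: (le_trans (pair_abs _ _)); apply: ler_wpM2r => //; lra.
Qed.

Lemma hess_psd (f : 'rV[R]_n -> R) gf x h : convex_fun f -> C2_with_gradient f gf ->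
  0 <= pair (hess gf x h) h.
Proof.
move=> cf [gr dgf _]; rewrite /hess -deriveE //.
have D : derivable gf x h := diff_derivable (dgf x).
have := @continuous_cvg _ _ _ _ _ _ (fun w => pair w h) _ (pair_cont h _) D.
move=> /(_ ltac:(exact: _)) /lim_right_ge; apply => t /andP[t0 t1] /=.
rewrite pairZl /=.
set z := t *: h + x.
have e1 := grad_ineq f gf x z cf gr; have e2 := grad_ineq f gf z x cf gr.
have zx : z - x = t *: h by rewrite /z addrK.
rewrite zx pairZr in e1; rewrite -opprB zx pairNr pairZr in e2.
rewrite pairDl pairNl.
apply: mulr_ge0; first by rewrite invr_ge0 ltW.
nra.
Qed.

End S2.

Section S3.
Local Open Scope ring_scope.
Lemma small_t (R : realType) (a c : R) :
  (forall t, 0 < t < 1 -> t * a <= t ^+ 2 * c) -> a <= 0.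
Proof.
move=> Ht; rewrite leNgt; apply/negP => a0.
have h1 : a <= 2^-1 * c.
  have := Ht 2^-1; rewrite invr_gt0 ltr0n invf_lt1 ?ltr0n ?ltr1n // => /(_ isT).
  by rewrite expr2 -mulrA ler_pM2l // invr_gt0 ltr0n.
have c0 : 0 < c by lra.
pose t := Num.min 2^-1 (a / (2 * c)).
have t0 : 0 < t by rewrite lt_min invr_gt0 ltr0n divr_gt0 // mulr_gt0 // ltr0n.
have t1 : t < 1.
  by rewrite gt_min; apply/orP; left; rewrite invf_lt1 ?ltr0n ?ltr1n.
have := Ht t; rewrite t0 t1 => /(_ isT); rewrite expr2 -mulrA ler_pM2l //.
have : t * c <= a / 2.
  have : t <= a / (2 * c) by rewrite ge_min lexx orbT.
  rewrite -(ler_pM2r c0) => /le_trans; apply.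
  rewrite le_eqVlt; apply/orP; left; apply/eqP; field; by rewrite gt_eqF.
move=> ? ?; lra.
Qed.

Lemma vec1 (R : realType) n (t : R) (a b : 'rV[R]_n) :
  t *: a + (1 - t) *: b - a = (1 - t) *: (b - a).
Proof. by apply/rowP => i; rewrite !mxE; ring. Qed.
Lemma vec2 (R : realType) n (t : R) (a b : 'rV[R]_n) :
  b - (t *: a + (1 - t) *: b) = t *: (b - a).
Proof. by apply/rowP => i; rewrite !mxE; ring. Qed.
Lemma vec3 (R : realType) n (t : R) (a b : 'rV[R]_n) :
  a - (t *: a + (1 - t) *: b) = (t - 1) *: (b - a).
Proof. by apply/rowP => i; rewrite !mxE; ring. Qed.

Lemma finE (R : realType) n (psi : 'rV[R]_n -> \bar R) x :
  (forall y, psi y != -oo%E) -> x \in dom psi -> psi x = (fine (psi x))%:E.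
Proof.
move=> Hn; rewrite inE /dom /= => Hx.
by rewrite fineK // fin_numE Hn /= lt_eqF.
Qed.

Lemma pair_pos (R : realType) n (v : 'rV[R]_n) : v != 0 -> 0 < pair v v.
Proof.
move=> v0.
have [i vi] : exists i, v ord0 i != 0.
  apply/not_existsP => H; move/eqP: v0; apply; apply/rowP => i.
  by rewrite !mxE; have := H i; case: eqP.
rewrite /pair (bigD1 i) //= ltr_pwDl ?sumr_ge0 // => [|j _].
  by rewrite lt_neqAle eq_sym mulf_neq0 //= -expr2 sqr_ge0.
by rewrite -expr2 sqr_ge0.
Qed.

End S3.

Theorem lemma2 (R : realType) (n : nat) (nrm : 'rV[R]_n -> R)
  (f : 'rV[R]_n -> R) (gf : 'rV[R]_n -> 'rV[R]_n) (psi : 'rV[R]_n -> \bar R)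
  (sigma : R) (d : 'rV[R]_n -> R) (gd : 'rV[R]_n -> 'rV[R]_n)
  (xbar : 'rV[R]_n) (H : R) (s : 'rV[R]_n) (A : R) (T : 'rV[R]_n) :
  is_norm nrm ->
  convex_fun f -> C2_with_gradient f gf ->
  closed_convex_fun psi ->
  0 < sigma <= 1 -> scaling_fun nrm psi sigma d gd ->
  xbar \in dom psi -> 0 < H ->
  subgrad psi xbar s -> gf xbar + s != 0 ->
  A = 1 / sigma * Num.sqrt (H / 3 * dual_norm nrm (gf xbar + s)) ->
  is_TA f gf psi d gd A xbar T ->
  f T <= f xbar + pair (gf xbar) (T - xbar)
         + 1 / 2 * pair (hess gf xbar (T - xbar)) (T - xbar)
         + H / 6 * nrm (T - xbar) ^+ 3 ->
  ((f xbar)%:E + psi xbar - ((f T)%:E + psi T) >=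
   (1 / 2 * pair (hess gf xbar (T - xbar)) (T - xbar)
    + 1 / 2 * sigma * A * nrm (T - xbar) ^+ 2)%:E)%E.
Proof.
move=> Hn cf C2 [psiNinf _ psiconv] /andP[s0 s1] [gd_grad sc _] xdom H0 subg gs0 AE
  [Tdom TAmin] fT.
have ePx := @finE _ _ psi _ psiNinf xdom; have ePT := @finE _ _ psi _ psiNinf Tdom.
set px := fine (psi xbar) in ePx *; set pT := fine (psi T) in ePT *.
set h := T - xbar in fT *.
have A0 : 0 <= A by rewrite AE mulr_ge0 ?sqrtr_ge0 // div1r invr_ge0 ltW.
have r0 := @nrm_ge0 _ _ nrm Hn h.
have stepA : pT - px <= - pair (gf xbar) h - pair (hess gf xbar h) h
                        - A * sigma * nrm h ^+ 2.
  suff : pT - px + pair (gf xbar) h + pair (hess gf xbar h) h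
          + A * sigma * nrm h ^+ 2 <= 0 by lra.
  apply: (@small_t _ _ (pair (hess gf xbar h) h / 2 + A * sigma * nrm h ^+ 2 / 2)) => t /andP[t0 t1].
  set z := t *: xbar + (1 - t) *: T.
  have cz := psiconv xbar T t xdom Tdom; rewrite t0 t1 /= in cz.
  have {cz} cz := cz isT.
  rewrite ePx ePT -!EFinM -EFinD in cz.
  have zdom : z \in dom psi.
    rewrite inE /dom /=; apply: (le_lt_trans cz); exact: ltry.
  have ePz := @finE _ _ psi _ psiNinf zdom; set pz := fine (psi z) in ePz *.
  rewrite ePz lee_fin in cz.
  have hm := TAmin z zdom.
  rewrite /model ePz ePT -!EFinD lee_fin in hm.
  have zx : z - xbar = (1 - t) *: h by rewrite /z vec1.
  rewrite /bregman zx -/h in hm.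
  have eQ : pair (hess gf xbar ((1 - t) *: h)) ((1 - t) *: h) = (1 - t) ^+ 2 * pair (hess gf xbar h) h.
    rewrite pairZr /hess linearZ /= expr2 -mulrA; congr (_ * _); exact: pairZl.
  rewrite eQ !pairZr in hm.
  have e1 := sc z T zdom Tdom; have e2 := sc z xbar zdom xdom; have e3 := sc xbar T xdom Tdom.
  rewrite /z vec2 -/h in e1; rewrite /z vec3 -/h in e2; rewrite -/h in e3.
  rewrite -/z !pairZr !(@nrmZ _ _ _ Hn) in e1 e2.
  rewrite (gtr0_norm t0) (@ltr0_norm _ (t - 1)) in e1 e2; last by lra.
  have t0' : 0 <= t by lra. have t1' : 0 <= 1 - t by lra.
  have k1 := ler_wpM2l t1' e1; have k2 := ler_wpM2l t0' e2; have k3 := ler_wpM2l t0' e3.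
  have k4 : d z - d T + t * pair (gd xbar) h <=
     - sigma * nrm h ^+ 2 * t + sigma / 2 * nrm h ^+ 2 * t ^+ 2.
    move: k1 k2 k3; rewrite !expr2; lra.
  have k5 := ler_wpM2l A0 k4.
  move: hm cz k5; rewrite !expr2; lra.
have Q0 : 0 <= pair (hess gf xbar h) h := @hess_psd _ _ f gf xbar h cf C2.
have sg := subg T; rewrite ePx ePT -EFinD lee_fin -/h in sg.
set v := gf xbar + s in AE gs0.
set N := dual_norm nrm v in AE.
have W : A * sigma * nrm h ^+ 2 <= pair v (- h).
  rewrite pairNr /v pairDl; lra.
have nv0 : 0 < nrm v.
  rewrite lt_neqAle (@nrm_ge0 _ _ nrm Hn) andbT; apply/eqP => /esym.
  by move/(@nrm_eq0 _ _ nrm Hn); apply/eqP.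
have N0 : 0 < N.
  have := @dual_ge _ _ nrm Hn v ((nrm v)^-1 *: v).
  rewrite (@nrmZ _ _ _ Hn) normfV (ger0_norm (ltW nv0)) mulVf ?gt_eqF // lexx pairZr.
  move=> /(_ isT); apply: lt_le_trans.
  by rewrite mulr_gt0 ?invr_gt0 // pair_pos.
have a0 : 0 < A * sigma.
  rewrite AE div1r mulrAC mulVf ?gt_eqF // mul1r sqrtr_gt0.
  by rewrite mulr_gt0 // divr_gt0.
have a2 : (A * sigma) ^+ 2 = H / 3 * N.
  rewrite AE div1r mulrAC mulVf ?gt_eqF // mul1r sqr_sqrtr //.
  by rewrite ltW // mulr_gt0 // divr_gt0.
have bnd : H * nrm h ^+ 3 <= 3 * (A * sigma) * nrm h ^+ 2.
  have [r0'|rpos] := eqVneq (nrm h) 0.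
    by rewrite r0' !expr0n /= !mulr0.
  have rp : 0 < nrm h by rewrite lt_neqAle eq_sym rpos r0.
  have : pair v (- h) <= nrm h * N.
    have := @dual_ge _ _ nrm Hn v ((nrm h)^-1 *: - h).
    rewrite (@nrmZ _ _ _ Hn) (@nrmN _ _ _ Hn) normfV (ger0_norm r0) mulVf ?gt_eqF // lexx pairZr.
    by move=> /(_ isT); rewrite -(ler_pM2l rp) mulrA mulfV ?gt_eqF // mul1r.
  move=> WN.
  have aN : A * sigma * nrm h <= N.
    by move: W WN; rewrite !expr2 => W WN; nra.
  have : H * nrm h <= 3 * (A * sigma).
    rewrite -(ler_pM2l a0); move: aN a2; rewrite !expr2 => aN a2; nra.
  move=> HA; rewrite [_ ^+ 3]exprS [_ ^+ 2]expr2; move: HA r0 => HA r0; nra.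

rewrite ePx ePT [X in (_ <= X)%E](_ : _ = (f xbar + px - (f T + pT))%:E) // lee_fin.
move: fT stepA bnd; lra.
Qed.
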